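(* Let $R$ be any finite Frobenius ring and let $\mathcal{P}_{\mathrm{hom}}=P_0\mid P_1\mid\cdots\mid P_M$ be its homogeneous weight partition. Then for each generating character $\chi$ of $R$, \[ \sum_{a\in P_m}\chi(ab)=\sum_{a\in P_m}\chi(ba)\quad\text{for all } b\in R \text{ and } m=0,\ldots,M. \] As a consequence, the left and right dual partitions of $\mathcal{P}_{\mathrm{hom}}$ coincide.
   Context: $\mathcal{P}_{\mathrm{hom}}$ is the partition of $R$ into level sets of the normalized homogeneous weight $\omega$ (the unique map $R\to\mathbb{R}$ with $\omega(0)=0$, $\omega(x)=\omega(y)$ whenever $Rx=Ry$, and $\sum_{y\in Rx}\omega(y)=|Rx|$ for $x\neq0$). Characters are group homomorphisms $(R,+)\to\mathbb{C}^*$; $\widehat{R}$ is an $R$-$R$-bimodule via $(r\cdot\chi)(v)=\chi(vr)$, $(\chi\cdot r)(v)=\chi(rv)$; a generating character is $\chi$ with $\widehat{R}=R\cdot\chi$ (equivalently $\widehat{R}=\chi\cdot R$); $R$ is Frobenius iff one exists. For a partition $\mathcal{P}=P_0\mid\cdots\mid P_M$ of $R$, the left $\chi$-dual partition is given by $b\sim b'$ iff $\sum_{a\in P_m}\chi(ab)=\sum_{a\in P_m}\chi(ab')$ for all $m$, and the right $\chi$-dual by $b\sim b'$ iff $\sum_{a\in P_m}\chi(ba)=\sum_{a\in P_m}\chi(b'a)$ for all $m$. *)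

(* Defs.v *)
From HB Require Import structures.
From mathcomp Require Import all_boot all_order all_algebra all_field.
Set Implicit Arguments. Unset Strict Implicit. Unset Printing Implicit Defensive.
Import Order.TTheory GRing.Theory Num.Theory.
Local Open Scope ring_scope.

(* A character of the additive group (R,+), valued in the complex numbers
   (algebraic complex numbers algC suffice: character values are roots of unity). *)
Definition is_character (R : finPzRingType) (chi : R -> algC) : Prop :=
  (forall x y : R, chi (x + y) = chi x * chi y) /\ (forall x : R, chi x != 0).

Definition lact (R : finPzRingType) (r : R) (chi : R -> algC) : R -> algC :=
  fun v => chi (v * r).

Definition generating_character (R : finPzRingType) (chi : R -> algC) : Prop :=
  is_character chi /\
  forall psi : R -> algC, is_character psi -> exists r : R, psi =1 lact r chi.

Definition frobenius_ring (R : finPzRingType) : Prop :=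
  exists chi : R -> algC, generating_character chi.

Definition lideal (R : finPzRingType) (x : R) : {set R} := [set r * x | r : R].

(* The normalized homogeneous weight (characterized by its defining properties;
   it is unique). *)
Definition homogeneous_weight (R : finPzRingType) (w : R -> algC) : Prop :=
  [/\ w 0 = 0,
      (forall x : R, w x \is Num.real),
      (forall x y : R, lideal x = lideal y -> w x = w y) &
      (forall x : R, x != 0 -> \sum_(y in lideal x) w y = #|lideal x|%:R)].

Definition hom_block (R : finPzRingType) (w : R -> algC) (c : algC) : {set R} :=
  [set a : R | w a == c].

(* Left and right chi-dual partitions of the partition into level sets of w. *)
Definition left_dual_rel (R : finPzRingType) (w : R -> algC) (chi : R -> algC)
  (b b' : R) : Prop :=
  forall c : algC, \sum_(a in hom_block w c) chi (a * b)
                 = \sum_(a in hom_block w c) chi (a * b').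

Definition right_dual_rel (R : finPzRingType) (w : R -> algC) (chi : R -> algC)
  (b b' : R) : Prop :=
  forall c : algC, \sum_(a in hom_block w c) chi (b * a)
                 = \sum_(a in hom_block w c) chi (b' * a).

(* Main.v *)
Require Import Defs.
From HB Require Import structures.
From mathcomp Require Import all_boot all_order all_algebra all_field.
From mathcomp Require Import fingroup classfun character.
Import Order.TTheory GRing.Theory Num.Theory.
Local Open Scope ring_scope.
Set Implicit Arguments. Unset Strict Implicit.

Section Gen.
Variable R : finPzRingType.
Variable chi : R -> algC.
Hypothesis gchi : generating_character chi.
Let gT : finGroupType := FinRing.Zmodule_to_finGroup (R : finZmodType).
Let G := [set: gT].

Lemma irr_is_char (i : Iirr G) : is_character (fun x : R => 'chi_i (x : gT)).
Proof.
have lin : 'chi_i \is a linear_char by apply/char_abelianP; exact: FinRing.zmod_abelian.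
split=> [x y|x].
  by have := lin_charM lin (in_setT (x : gT)) (in_setT (y : gT)).
by rewrite (lin_char_neq0 lin) ?inE.
Qed.

Lemma exists_g (i : Iirr G) : exists r : R, [forall x : R, 'chi_i (x : gT) == chi (x * r)].
Proof.
have [r Hr] := gchi.2 _ (irr_is_char i).
by exists r; apply/forallP => x; rewrite Hr.
Qed.

Let g (i : Iirr G) : R := xchoose (exists_g i).

Lemma gP i x : 'chi_i (x : gT) = chi (x * g i).
Proof. by have /forallP/(_ x)/eqP := xchooseP (exists_g i). Qed.

Lemma g_inj : injective g.
Proof.
move=> i j eij; apply: irr_inj; apply/cfunP => x.
by rewrite (gP i x) (gP j x) eij.
Qed.

Lemma g_onto r : r \in codom g.
Proof.
apply: inj_card_onto g_inj _ r.
by rewrite card_Iirr_abelian ?FinRing.zmod_abelian // cardsT.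
Qed.

Lemma lact_inj r r' : (forall x, chi (x * r) = chi (x * r')) -> r = r'.
Proof.
have /codomP [i ->] := g_onto r; have /codomP [j ->] := g_onto r' => H.
suff -> : i = j by [].
apply: irr_inj; apply/cfunP => x.
by rewrite (gP i x) (gP j x) H.
Qed.

Lemma right_faithful d : (forall a, chi (d * a) = 1) -> d = 0.
Proof.
move=> H.
have: (d : gT) \in \bigcap_i cfker 'chi[G]_i.
  apply/bigcapP => i _; rewrite cfkerEirr inE.
  rewrite (gP i) (gP i 1%g) H.
  have := gP i 1%g. rewrite (lin_char1 _) ?(char_abelianP _ _) ?FinRing.zmod_abelian //.
  by move<-.
by rewrite TI_cfker_irr inE => /eqP.
Qed.
End Gen.
Section Uniq.
Variable R : finPzRingType.

Lemma in_lideal (x r : R) : r * x \in lideal x.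
Proof. by apply/imsetP; exists r. Qed.

Lemma lidealP (x y : R) : reflect (exists r, y = r * x) (y \in lideal x).
Proof.
apply: (iffP imsetP) => [[r _ ->]|[r ->]]; by exists r.
Qed.

Lemma self_lideal (x : R) : x \in lideal x.
Proof. by have := in_lideal x 1; rewrite mul1r. Qed.

Lemma lideal_sub (x y : R) : y \in lideal x -> lideal y \subset lideal x.
Proof.
move=> /lidealP [r ->]; apply/subsetP => z /lidealP [s ->].
by rewrite mulrA in_lideal.
Qed.

Lemma hw_unique (w1 w2 : R -> algC) :
  homogeneous_weight w1 -> homogeneous_weight w2 -> w1 =1 w2.
Proof.
move=> [h10 _ h1i h1s] [h20 _ h2i h2s].
suff H : forall n x, (#|lideal x| <= n)%N -> w1 x = w2 x.
  by move=> x; exact: (H _ x (leqnn _)).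
elim=> [|n IH] x.
  by rewrite leqn0 => /eqP/cards0_eq/setP/(_ x); rewrite self_lideal inE.
move=> hn; have [->|nz] := eqVneq x 0; first by rewrite h10 h20.
have := h1s x nz; rewrite -(h2s x nz).
rewrite (bigID (fun y => lideal y == lideal x)) [RHS](bigID (fun y => lideal y == lideal x)) /=.
have -> : \sum_(i in lideal x | lideal i != lideal x) w1 i
        = \sum_(i in lideal x | lideal i != lideal x) w2 i.
  apply: eq_bigr => y /andP [yin ne]; apply: IH.
  have pr : lideal y \proper lideal x by rewrite properEneq ne lideal_sub.
  by rewrite -ltnS (leq_trans (proper_card pr)).
move/addIr.
rewrite (eq_bigr (fun _ => w1 x)); last by move=> y /andP [_ /eqP e]; exact: h1i.
rewrite [X in _ = X -> _](eq_bigr (fun _ => w2 x)); last by move=> y /andP [_ /eqP e]; exact: h2i.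
set K := \sum_(i in lideal x | lideal i == lideal x) (1 : algC).
have cst : forall c : algC, \sum_(i in lideal x | lideal i == lideal x) c = c * K.
  by move=> c; rewrite mulr_sumr; apply: eq_bigr => *; rewrite mulr1.
rewrite !cst => /mulIf; apply.
rewrite /K (bigD1 x) /=; last by rewrite self_lideal eqxx.
by rewrite gt_eqF // ltr_wpDr // sumr_ge0.
Qed.
End Uniq.
Section Nak.
Variable R : finPzRingType.
Variable chi : R -> algC.
Hypothesis gchi : generating_character chi.

Lemma chi0 : chi 0 = 1.
Proof.
have h := gchi.1.1 0 0; rewrite addr0 in h.
by apply: (mulIf (gchi.1.2 0)); rewrite mul1r -h.
Qed.

Lemma chiN x : chi (- x) = (chi x)^-1.
Proof.
apply: (mulfI (gchi.1.2 x)).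
by rewrite -gchi.1.1 subrr chi0 divff // gchi.1.2.
Qed.

Lemma exists_sig (b : R) : exists r : R, [forall a : R, chi (b * a) == chi (a * r)].
Proof.
have ch : is_character (fun a => chi (b * a)).
  by split=> [x y|x]; rewrite ?mulrDr ?gchi.1.1 ?gchi.1.2.
have [r Hr] := gchi.2 _ ch.
by exists r; apply/forallP => a; rewrite Hr.
Qed.

Definition sig (b : R) : R := xchoose (exists_sig b).

Lemma sigP b a : chi (b * a) = chi (a * sig b).
Proof. by have /forallP/(_ a)/eqP := xchooseP (exists_sig b). Qed.

Lemma sigM a b : sig (a * b) = sig a * sig b.
Proof.
apply: (lact_inj gchi) => x.
by rewrite -sigP -mulrA sigP -mulrA sigP -mulrA.
Qed.

Lemma sig0 : sig 0 = 0.
Proof.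
apply: (lact_inj gchi) => x.
by rewrite -sigP !mul0r mulr0.
Qed.

Lemma sig_inj : injective sig.
Proof.
move=> b b' e; apply/eqP; rewrite -subr_eq0; apply/eqP.
apply: (right_faithful gchi) => a.
rewrite mulrBl gchi.1.1 chiN sigP (sigP b') e divff //.
exact: gchi.1.2.
Qed.

Lemma sig_onto y : y \in codom sig.
Proof. exact: inj_card_onto sig_inj _ y. Qed.

Lemma lideal_sig x : lideal (sig x) = sig @: lideal x.
Proof.
apply/setP => y; apply/idP/idP.
  move=> /lidealP [r ->]; have /codomP [r0 ->] := sig_onto r.
  by rewrite -sigM; apply: imset_f; apply: in_lideal.
by move=> /imsetP [z /lidealP [r ->] ->]; rewrite sigM in_lideal.
Qed.

Lemma w_sig (w : R -> algC) : homogeneous_weight w -> forall x, w (sig x) = w x.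
Proof.
move=> hw; have [h0 hr hi hs] := hw.
apply: (hw_unique _ hw); split.
- by rewrite /= sig0.
- by move=> x; exact: hr.
- by move=> x y e; apply: hi; rewrite !lideal_sig e.
move=> x nz /=.
have nz' : sig x != 0 by apply/eqP => e; move/eqP: nz; apply; apply: sig_inj; rewrite e sig0.
rewrite -(big_imset (fun y => w y)); last by move=> ? ? _ _; exact: sig_inj.
by rewrite -lideal_sig hs // lideal_sig card_imset //; exact: sig_inj.
Qed.
End Nak.
Unset Implicit Arguments. Set Strict Implicit.

Theorem theorem5p12 (R : finPzRingType) (w : R -> algC) :
  frobenius_ring R ->
  homogeneous_weight w ->
  forall chi : R -> algC, generating_character chi ->
    (forall (b : R) (c : algC),
        \sum_(a in hom_block w c) chi (a * b)
      = \sum_(a in hom_block w c) chi (b * a)) /\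
    (forall b b' : R, left_dual_rel w chi b b' <-> right_dual_rel w chi b b').
Proof.
move=> _ hw chi gchi.
have main : forall (b : R) (c : algC),
        \sum_(a in hom_block w c) chi (a * b)
      = \sum_(a in hom_block w c) chi (b * a).
  move=> b c.
  rewrite (eq_bigr (fun a => chi (sig gchi a * sig gchi b))); last first.
    by move=> a _; rewrite (sigP gchi a b) (sigP gchi b).
  rewrite [RHS](eq_bigr (fun a => chi (a * sig gchi b))); last first.
    by move=> a _; rewrite (sigP gchi b a).
  rewrite [RHS](reindex_inj (@sig_inj _ _ gchi)) /=.
  by apply: eq_bigl => a; rewrite !inE (@w_sig _ _ gchi _ hw).
split=> // b b'; split=> H c.
  by rewrite -!main.
by rewrite !main.
Qed.
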